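(* (i) For all $a,\ell>0$: $\kappa\in(0,1)$, $$r_0(a,\ell)\approx\frac{\ell}{\langle a\sqrt\ell\rangle},\quad\kappa(a,\ell)\approx\langle a\sqrt\ell\rangle^{-1},\quad p(a,\ell)\approx\frac1{a^2}\langle a\sqrt\ell\rangle,\quad\frac1{1-\kappa}\approx\Big\langle\frac1{a^2\ell}\Big\rangle,\quad a\ell\kappa^2\approx\min\Big\{a\ell,\frac1a\Big\}.$$ (ii) For all $(\theta,a,\ell)\in\mathbb R\times(0,\infty)^2$, with $R=R(\theta,a,\ell)$: $$R\ge r_0=p(1-\kappa),\qquad\frac Rp+\kappa\approx\Big\langle\frac Rp\Big\rangle,\qquad\Big|\frac Rp+\kappa-\frac{|\theta|}{p}\Big|\lesssim\ln\Big\langle\frac Rp\Big\rangle,\qquad|\theta|\lesssim R\lesssim p+|\theta|.$$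
   Context: Fix $m>0$. For $a,\ell>0$: $\kappa(a,\ell)=(1+4a^2\ell/m^2)^{-1/2}$, $p(a,\ell)=\frac{m}{2a^2\kappa(a,\ell)}$, $r_0(a,\ell)=\frac{m}{2a^2}\big(\sqrt{1+4a^2\ell/m^2}-1\big)$. For $\kappa\in(0,1)$, $G_\kappa(x)=\sqrt{x^2-1}-\kappa\ln(x+\sqrt{x^2-1})$ on $[1,\infty)$, $H_\kappa=G_\kappa^{-1}:[0,\infty)\to[1,\infty)$, and $R(\theta,a,\ell)=pH_\kappa(|\theta|/p)-p\kappa$. $\langle x\rangle=(2+|x|^2)^{1/2}$. $A\lesssim B$ means $A\le CB$ with $C$ independent of $\theta,a,\ell$ (possibly depending on $m$); $A\approx B$ means $A\lesssim B$ and $B\lesssim A$. *)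

(* Defs.v *)
From Stdlib Require Import Reals Lra ClassicalEpsilon.
Open Scope R_scope.

Definition kappa (m a l : R) : R := / sqrt (1 + 4 * a^2 * l / m^2).

Definition pp (m a l : R) : R := m / (2 * a^2 * kappa m a l).

Definition r0 (m a l : R) : R :=
  m / (2 * a^2) * (sqrt (1 + 4 * a^2 * l / m^2) - 1).

Definition Gk (k x : R) : R := sqrt (x^2 - 1) - k * ln (x + sqrt (x^2 - 1)).

(* H_kappa = G_kappa^{-1} : [0,oo) -> [1,oo): H_kappa y is the (unique,
   for kappa in (0,1) and y >= 0) x >= 1 with G_kappa x = y. *)
Definition Hk (k y : R) : R :=
  epsilon (inhabits 1) (fun x => 1 <= x /\ Gk k x = y).

Definition RR (m theta a l : R) : R :=
  pp m a l * Hk (kappa m a l) (Rabs theta / pp m a l) - pp m a l * kappa m a l.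

(* Japanese bracket <x> = (2 + |x|^2)^(1/2) *)
Definition jb (x : R) : R := sqrt (2 + x^2).

Definition approx (C A B : R) : Prop := A <= C * B /\ B <= C * A.

(* Main.v *)
Require Import Defs.
From Stdlib Require Import Reals Lra Psatz ClassicalEpsilon.
Open Scope R_scope.

Lemma sqle (x y : R) : 0 <= y -> x*x <= y*y -> x <= y.
Proof. intros; nra. Qed.

Lemma scale (x y c C : R) : 0 < c -> x*c <= C*(y*c) -> x <= C*y.
Proof. intros hc h. apply Rmult_le_reg_r with c; auto. rewrite Rmult_assoc; exact h. Qed.

Lemma part1 (m C a l : R) : 0 < m -> C = 10 * (1 + m + /m)^2 -> 0 < a -> 0 < l ->
       (0 < kappa m a l < 1) /\
       approx C (r0 m a l) (l / jb (a * sqrt l)) /\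
       approx C (kappa m a l) (/ jb (a * sqrt l)) /\
       approx C (pp m a l) (/ a^2 * jb (a * sqrt l)) /\
       approx C (/ (1 - kappa m a l)) (jb (/ (a^2 * l))) /\
       approx C (a * l * (kappa m a l)^2) (Rmin (a * l) (/ a)).
Proof.
  intros hm hC ha hl.
  set (im := / m) in *.
  assert (hmi : m * im = 1) by (unfold im; field; lra).
  assert (him : 0 < im) by (unfold im; apply Rinv_0_lt_compat; lra).
  set (N := 1 + m + im) in hC.
  assert (hN1 : 1 <= N) by (unfold N; lra).
  assert (hmN : m <= N) by (unfold N; lra).
  assert (himN : im <= N) by (unfold N; lra).
  assert (hNN : N <= N^2) by nra.
  assert (hm2 : m^2 <= N^2) by nra.
  assert (him2 : im^2 <= N^2) by nra.
  clearbody N.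
  assert (K1 : 4*im + 2 <= C) by (subst C; nra).
  assert (K2 : 2*m + 4 <= C) by (subst C; nra).
  assert (K3 : 1 + 2*im <= C) by (subst C; nra).
  assert (K4 : m^2/2 + 2 <= C) by (subst C; nra).
  assert (K5 : 4*im^2 <= C) by (subst C; nra).
  assert (K6 : m^2 <= 4*C) by (subst C; nra).
  assert (K7 : 1 + 4*im^2 <= C) by (subst C; nra).
  assert (K8 : 10 <= C) by (subst C; nra).
  clear hC.
  set (u := a^2 * l).
  assert (ha2 : 0 < a^2) by (apply pow_lt; lra).
  assert (hu : 0 < u) by (unfold u; apply Rmult_lt_0_compat; lra).
  assert (hX : 1 + 4 * a^2 * l / m^2 = 1 + 4*u*im^2) by (unfold u, im; field; lra).
  set (s := sqrt (1 + 4 * a^2 * l / m^2)).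
  assert (hs : s * s = 1 + 4*u*im^2) by (unfold s; rewrite sqrt_sqrt; [lra| rewrite hX; nra]).
  assert (hs0 : 0 <= s) by apply sqrt_pos.
  assert (hui : 0 < u*im^2) by (apply Rmult_lt_0_compat; [lra | apply pow_lt; lra]).
  assert (hs1 : 1 < s) by nra.
  assert (hk : kappa m a l = / s) by reflexivity.
  set (J := jb (a * sqrt l)).
  assert (hJ : J * J = 2 + u).
  { assert (hl2 : (a * sqrt l)^2 = u) by (unfold u; replace ((a * sqrt l)^2) with (a^2 * (sqrt l * sqrt l)) by ring; rewrite sqrt_sqrt; lra).
    unfold J, jb. rewrite hl2. apply sqrt_sqrt. lra. }
  assert (hJ0 : 0 <= J) by (unfold J, jb; apply sqrt_pos).
  assert (hJ1 : 1 <= J) by (apply sqle; nra).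
  assert (hJs : J <= (2+m)*s).
  { apply sqle; [nra|]. assert (1 <= ((2+m)*im)^2) by nra. nra. }
  assert (hsJ : s <= (1 + 2*im)*J).
  { apply sqle; [nra|]. nra. }
  assert (his : 0 < / s) by (apply Rinv_0_lt_compat; lra).
  assert (hiss : s * / s = 1) by (field; lra).
  split.
  { rewrite hk. split; auto. apply Rlt_le_trans with (/1); [apply Rinv_lt_contravar; lra | lra]. }
  split.
  {
    assert (hr0 : r0 m a l = 2*l/(m*(s+1))).
    { unfold r0. fold s. apply Rmult_eq_reg_r with (m*(s+1)); [|nra].
      assert (e1 : m / (2 * a ^ 2) * (s - 1) * (m * (s + 1)) = m*m/(2*a^2) * (s*s-1)) by (field; lra). rewrite e1.
      rewrite hs. unfold u, im. field. split; lra. }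
    assert (hmsJ : 0 < m*(s+1)*J) by (apply Rmult_lt_0_compat; [apply Rmult_lt_0_compat|]; lra).
    assert (hms : 0 < m*(s+1)) by (apply Rmult_lt_0_compat; lra).
    rewrite hr0. split.
    - apply (scale _ _ (m*(s+1)*J/l)). { apply Rdiv_lt_0_compat; lra. }
      replace (2 * l / (m * (s + 1)) * (m * (s + 1) * J / l)) with (2*J) by (field; repeat split; nra).
      replace (l / J * (m * (s + 1) * J / l)) with (m*(s+1)) by (field; split; nra).
      nra.
    - apply (scale _ _ (m*(s+1)*J/l)). { apply Rdiv_lt_0_compat; lra. }
      replace (2 * l / (m * (s + 1)) * (m * (s + 1) * J / l)) with (2*J) by (field; repeat split; nra).
      replace (l / J * (m * (s + 1) * J / l)) with (m*(s+1)) by (field; split; nra).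
      nra. }
  split.
  { rewrite hk. split.
    - apply (scale _ _ (s*J)); [nra|].
      replace (/ s * (s * J)) with J by (field; lra).
      replace (/ J * (s * J)) with s by (field; lra). nra.
    - apply (scale _ _ (s*J)); [nra|].
      replace (/ s * (s * J)) with J by (field; lra).
      replace (/ J * (s * J)) with s by (field; lra). nra. }
  split.
  { assert (hp : pp m a l = m * s / (2 * a^2)) by (unfold pp; rewrite hk; field; split; lra).
    rewrite hp. split.
    - apply (scale _ _ (2*a^2)); [nra|].
      replace (m * s / (2 * a ^ 2) * (2 * a ^ 2)) with (m*s) by (field; lra).
      replace (/ a ^ 2 * J * (2 * a ^ 2)) with (2*J) by (field; lra). nra.
    - apply (scale _ _ (2*a^2)); [nra|].
      replace (m * s / (2 * a ^ 2) * (2 * a ^ 2)) with (m*s) by (field; lra).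
      replace (/ a ^ 2 * J * (2 * a ^ 2)) with (2*J) by (field; lra).
      assert (hCm : 4 + 2*m <= C*m) by (assert ((4*im+2)*m <= C*m) by nra; nra).
      assert ((4+2*m)*s <= C*m*s) by nra. nra. }
  split.
  { set (iu := / u).
    assert (hiu : u * iu = 1) by (unfold iu; field; lra).
    assert (hiu0 : 0 < iu) by (unfold iu; apply Rinv_0_lt_compat; lra).
    assert (h1k : / (1 - kappa m a l) = s*(s+1)*m^2*iu/4).
    { rewrite hk. apply Rmult_eq_reg_r with (1 - /s).
      2:{ assert (/s < 1) by (apply Rlt_le_trans with (/1); [apply Rinv_lt_contravar; lra | lra]). lra. }
      rewrite Rinv_l. 2:{ assert (/s < 1) by (apply Rlt_le_trans with (/1); [apply Rinv_lt_contravar; lra | lra]). lra. }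
      replace (s * (s + 1) * m ^ 2 * iu / 4 * (1 - / s)) with ((s*s - 1) * m^2 * iu/4) by (field; lra).
      rewrite hs. replace (1 + 4 * u * im ^ 2 - 1) with (4*u*im^2) by field.
      replace (4 * u * im ^ 2 * m ^ 2 * iu / 4) with ((u*iu)*(m*im)^2) by field.
      rewrite hiu, hmi. ring. }
    rewrite h1k.
    set (J' := jb iu).
    assert (hJ' : J' * J' = 2 + iu^2) by (unfold J', jb; rewrite sqrt_sqrt; [reflexivity| nra]).
    assert (hJ'0 : 0 <= J') by (unfold J', jb; apply sqrt_pos).
    assert (hJ'1 : 1 <= J') by (apply sqle; nra).
    assert (hJ'2 : iu <= J') by (apply sqle; nra).
    assert (hJ'3 : J' <= 2 + iu) by (apply sqle; nra).
    split.
    - assert (s*(s+1) <= 2*(s*s)) by nra.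
      assert (s * (s + 1) * m ^ 2 * iu / 4 <= m^2*iu/2 + 2).
      { apply Rle_trans with (2*(s*s)*m^2*iu/4). { assert (0 <= m^2*iu) by nra. nra. }
        rewrite hs. replace (2 * (1 + 4 * u * im ^ 2) * m ^ 2 * iu / 4) with (m^2*iu/2 + 2*(u*iu)*(m*im)^2) by field.
        rewrite hiu, hmi. lra. }
      assert (m^2*iu <= m^2*J') by (apply Rmult_le_compat_l; [apply pow2_ge_0 | lra]).
      assert (m^2*iu/2 + 2 <= (m^2/2+2) * J') by lra.
      assert ((m^2/2+2) * J' <= C * J') by (apply Rmult_le_compat_r; lra). lra.
    - assert (s*s <= s*(s+1)) by nra.
      assert (m^2*iu/4 + 1 <= s * (s + 1) * m ^ 2 * iu / 4).
      { apply Rle_trans with ((s*s)*m^2*iu/4). 2:{ assert (0 <= m^2*iu) by nra. nra. }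
        rewrite hs. replace ((1 + 4 * u * im ^ 2) * m ^ 2 * iu / 4) with (m^2*iu/4 + (u*iu)*(m*im)^2) by field.
        rewrite hiu, hmi. lra. }
      assert (h1 : 1 <= C*m^2/4).
      { assert (h4 : 4*im^2*m^2 <= C*m^2) by (apply Rmult_le_compat_r; [apply pow2_ge_0 | lra]).
        replace (4*im^2*m^2) with (4*(m*im)^2) in h4 by field. rewrite hmi in h4. lra. }
      assert (h2 : 1*iu <= (C*m^2/4)*iu) by (apply Rmult_le_compat_r; lra).
      assert (h3 : 2 + iu <= C * (m^2*iu/4 + 1)).
      { replace (C * (m^2*iu/4 + 1)) with ((C*m^2/4)*iu + C) by field. lra. }
      assert (h5 : C * (m^2*iu/4 + 1) <= C * (s * (s + 1) * m ^ 2 * iu / 4)) by (apply Rmult_le_compat_l; lra).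
      lra. }
  { rewrite hk.
    assert (hv : a * l * (/ s)^2 = a * l * / (1 + 4*u*im^2)).
    { rewrite <- hs. field. lra. }
    rewrite hv.
    assert (hd : 1 <= 1 + 4*u*im^2) by nra.
    set (D := 1 + 4*u*im^2) in *.
    assert (hiD : 0 < / D) by (apply Rinv_0_lt_compat; lra).
    assert (hDD : D * / D = 1) by (field; lra).
    assert (hial : 0 < /a) by (apply Rinv_0_lt_compat; lra).
    assert (haa : a * / a = 1) by (field; lra).
    assert (hal : 0 < a * l) by nra.
    split.
    - unfold Rmin. destruct (Rle_dec (a * l) (/ a)) as [h|h].
      + assert (/D <= 1) by (apply Rle_trans with (/1); [apply Rinv_le_contravar; lra | lra]). nra.
      +
        apply (scale _ _ (a * D)); [nra|].
        replace (a * l * / D * (a * D)) with u by (unfold u; field; lra).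
        replace (/ a * (a * D)) with D by (field; lra).
        unfold D. assert (1 <= C*(4*im^2)). { assert (m^2 * im^2 <= 4*C*im^2) by nra.
          replace (m^2*im^2) with ((m*im)^2) in H by field. rewrite hmi in H. lra. }
        nra.
    - unfold Rmin. destruct (Rle_dec (a * l) (/ a)) as [h|h].
      +
        assert (u <= 1). { unfold u. assert (a*(a*l) <= a * /a) by (apply Rmult_le_compat_l; lra). nra. }
        apply (scale _ _ D); [lra|].
        replace (a * l * / D * D) with (a*l) by (field; lra).
        assert (D <= C) by (unfold D; nra). nra.
      + assert (1 <= u). { unfold u. assert (a * /a <= a*(a*l)) by (apply Rmult_le_compat_l; lra). nra. }
        apply (scale _ _ (a*D)); [nra|].
        replace (/ a * (a * D)) with D by (field; lra).
        replace (a * l * / D * (a * D)) with u by (unfold u; field; lra).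
        assert (D <= C*u) by (unfold D; nra). lra. }
Qed.
Lemma ln_le' (x y : R) : 0 < x -> x <= y -> ln x <= ln y.
Proof. intros hx [h|h]. left; apply ln_increasing; auto. subst; lra. Qed.

Lemma ln_sub1 (x : R) : 0 < x -> ln x <= x - 1.
Proof. intros hx. pose proof (exp_ineq1_le (ln x)). rewrite exp_ln in H; lra. Qed.

Lemma ln_pos' (x : R) : 1 <= x -> 0 <= ln x.
Proof. intros. rewrite <- ln_1. apply ln_le'; lra. Qed.

Lemma part2 (k y x : R) : 0 < k < 1 -> 0 <= y -> 1 <= x -> Gk k x = y ->
  x <= 2 * jb (x - k) /\ jb (x - k) <= 2 * x /\
  Rabs (x - y) <= 9 * ln (jb (x - k)) /\ y <= 3 * (x - k) /\ x <= 10 * (1 + y).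
Proof.
  intros hk hy hx hG. unfold Gk in hG.
  set (sq := sqrt (x^2 - 1)) in *.
  assert (hsq : sq * sq = x^2 - 1) by (apply sqrt_sqrt; nra).
  assert (hsq0 : 0 <= sq) by apply sqrt_pos.
  set (E := x + sq) in *.
  set (t := ln E) in *.
  assert (hE : 1 <= E) by (unfold E; lra).
  set (iE := / E).
  assert (hEi : E * iE = 1) by (unfold iE; field; lra).
  assert (hiE : x - sq = iE) by (unfold E in hEi; nra).
  assert (hiE0 : 0 < iE) by (unfold iE; apply Rinv_0_lt_compat; lra).
  assert (ht0 : 0 <= t) by (apply ln_pos'; auto).
  assert (ht1 : t <= E - 1) by (apply ln_sub1; lra).
  assert (ht2 : 1 - iE <= t).
  { pose proof (ln_sub1 iE hiE0). unfold iE in H. rewrite ln_Rinv in H by lra. fold iE in H. unfold t; lra. }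
  set (J := jb (x - k)).
  assert (hJ : J * J = 2 + (x-k)^2) by (unfold J, jb; apply sqrt_sqrt; nra).
  assert (hJ0 : 0 <= J) by (unfold J, jb; apply sqrt_pos).
  assert (hxJ : x <= 2 * J) by (apply sqle; nra).
  assert (hJx : J <= 2 * x) by (apply sqle; nra).
  assert (hJ1 : 1 <= J) by (apply sqle; nra).
  assert (hlnJ : 1 <= 4 * ln J).
  { assert (ln (J*J) = 2 * ln J) by (rewrite ln_mult; lra).
    assert (ln 2 <= ln (J*J)) by (apply ln_le'; nra).
    pose proof ln_lt_2. lra. }
  assert (htJ : t <= 5 * ln J).
  { assert (ln (J^5) = 5 * ln J) by (rewrite ln_pow by lra; simpl; ring).
    assert (E <= J^5).
    { assert (2 <= J*J) by nra. assert (4 <= (J*J)*(J*J)) by nra. assert (sq <= x) by (apply sqle; nra). assert (E <= 2*x) by (unfold E; lra). simpl. nra. }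
    assert (t <= ln (J^5)) by (apply ln_le'; lra). lra. }
  split; [exact hxJ|]. split; [exact hJx|]. split; [|split].
  - assert (0 <= k*t) by nra. rewrite Rabs_pos_eq by nra. nra.
  -
    assert (hsx : sq - t <= x - 1) by lra.
    assert ((1-k)*t <= (1-k)*(E + iE - 1)) by (apply Rmult_le_compat_l; lra).
    assert (E + iE - 1 = 2*x - 1) by (unfold E; lra).
    nra.
  - set (r := sqrt E).
    assert (hr : r * r = E) by (apply sqrt_sqrt; lra).
    assert (hr0 : 0 < r) by (apply sqrt_lt_R0; lra).
    assert (t = 2 * ln r) by (unfold t; rewrite <- hr, ln_mult by lra; ring).
    assert (ln r <= r - 1) by (apply ln_sub1; lra).
    assert (y >= sq - t) by nra.
    assert (sq >= (E - 1)/2) by (unfold E in *; nra).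
    assert (x <= E) by (unfold E; lra).
    nra.
Qed.
Lemma Hk_exists (k y : R) : 0 < k < 1 -> 0 <= y -> exists x, 1 <= x /\ Gk k x = y.
Proof.
  intros hk hy. destruct hy as [hy|hy].
  2:{ subst. exists 1. split; [lra|]. unfold Gk.
      replace (1^2-1) with 0 by ring. rewrite sqrt_0, Rplus_0_r, ln_1. ring. }
  set (f := fun t => (exp t - exp (- t))/2 - k*t - y).
  assert (cf : continuity f).
  { unfold f. apply derivable_continuous. reg. }
  set (T := 4 + 8*y).
  assert (f0 : f 0 < 0).
  { unfold f. rewrite Ropp_0, exp_0. lra. }
  assert (fT : 0 < f T).
  { unfold f.
    assert (h1 : 1 + T/2 <= exp (T/2)) by apply exp_ineq1_le.
    assert (h2 : exp T = exp (T/2) * exp (T/2)) by (rewrite <- exp_plus; f_equal; field).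
    assert (h3 : exp (-T) <= 1).
    { rewrite exp_Ropp. assert (1 <= exp T) by (pose proof (exp_ineq1_le T); unfold T in *; lra).
      apply Rle_trans with (/1); [apply Rinv_le_contravar; lra| lra]. }
    assert (0 <= T/2) by (unfold T; lra).
    assert (exp T >= 1 + T + T*T/4) by nra.
    assert (k*T <= T) by (unfold T in *; nra).
    unfold T in *. nra. }
  destruct (IVT f 0 T cf ltac:(unfold T; lra) f0 fT) as [z [hz fz]].
  set (e := exp z).
  assert (he : 1 <= e) by (pose proof (exp_ineq1_le z); unfold e; lra).
  assert (hie : exp (-z) = / e) by (apply exp_Ropp).
  exists ((e + /e)/2).
  assert (hei : e * / e = 1) by (field; lra).
  assert (hi : / e <= 1) by (apply Rle_trans with (/1); [apply Rinv_le_contravar; lra| lra]).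
  assert (0 < / e) by (apply Rinv_0_lt_compat; lra).
  split; [nra|].
  unfold Gk.
  assert (hne : e <> 0) by lra.
  replace (((e + / e) / 2) ^ 2 - 1) with (((e - / e)/2)^2) by (field; try exact hne).
  rewrite sqrt_pow2 by nra.
  assert (hs : (e + / e) / 2 + (e - / e) / 2 = e) by (field; exact hne). rewrite hs.
  replace (ln e) with z by (unfold e; symmetry; apply ln_exp).
  unfold f in fz. cbv beta in fz. rewrite hie in fz. fold e in fz. lra.
Qed.

Theorem lemma2p12 (m : R) (hm : 0 < m) :
  exists C : R, 0 < C /\
    (forall a l : R, 0 < a -> 0 < l ->
       (0 < kappa m a l < 1) /\
       approx C (r0 m a l) (l / jb (a * sqrt l)) /\
       approx C (kappa m a l) (/ jb (a * sqrt l)) /\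
       approx C (pp m a l) (/ a^2 * jb (a * sqrt l)) /\
       approx C (/ (1 - kappa m a l)) (jb (/ (a^2 * l))) /\
       approx C (a * l * (kappa m a l)^2) (Rmin (a * l) (/ a))) /\
    (forall theta a l : R, 0 < a -> 0 < l ->
       let Rv := RR m theta a l in
       let p := pp m a l in
       let k := kappa m a l in
       r0 m a l <= Rv /\ r0 m a l = p * (1 - k) /\
       approx C (Rv / p + k) (jb (Rv / p)) /\
       Rabs (Rv / p + k - Rabs theta / p) <= C * ln (jb (Rv / p)) /\
       Rabs theta <= C * Rv /\
       Rv <= C * (p + Rabs theta)).
Proof.
  set (C := 10 * (1 + m + / m)^2).
  assert (him : 0 < / m) by (apply Rinv_0_lt_compat; lra).
  assert (K8 : 10 <= C).
  { unfold C. assert (1 <= 1 + m + / m) by lra. nra. }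
  exists C. split; [lra|]. split.
  { intros a l ha hl. apply part1; auto. }
  intros theta a l ha hl. cbv zeta.
  destruct (part1 m C a l hm eq_refl ha hl) as [hk _].
  set (k := kappa m a l) in *.
  assert (ha2 : 0 < a^2) by (apply pow_lt; lra).
  assert (hp : 0 < pp m a l).
  { unfold pp. fold k. apply Rdiv_lt_0_compat; [lra|]. apply Rmult_lt_0_compat; lra. }
  set (p := pp m a l) in *.
  set (y := Rabs theta / p).
  assert (hy : 0 <= y) by (unfold y; apply Rmult_le_pos; [apply Rabs_pos | left; apply Rinv_0_lt_compat; lra]).
  assert (hx := epsilon_spec (inhabits 1) (fun x => 1 <= x /\ Gk k x = y) (Hk_exists k y hk hy)).
  fold (Hk k y) in hx. destruct hx as [hx1 hxG].
  set (x := Hk k y) in *.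
  destruct (part2 k y x hk hy hx1 hxG) as [h1 [h2 [h3 [h4 h5]]]].
  assert (hR : RR m theta a l = p * x - p * k) by reflexivity.
  rewrite hR.
  assert (e1 : (p * x - p * k) / p + k = x) by (field; lra).
  assert (e2 : (p * x - p * k) / p = x - k) by (field; lra).
  rewrite e1, e2.
  assert (hr0 : r0 m a l = p * (1 - k)).
  { unfold r0, p, pp, k, kappa.
    assert (0 < sqrt (1 + 4 * a ^ 2 * l / m ^ 2)).
    { apply sqrt_lt_R0. assert (0 <= 4 * a ^ 2 * l / m ^ 2).
      { apply Rmult_le_pos; [nra | left; apply Rinv_0_lt_compat, pow_lt; lra]. } lra. }
    field. repeat split; lra. }
  assert (hth : Rabs theta = p * y) by (unfold y; field; lra).
  assert (hJ : 0 <= ln (jb (x - k))).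
  { apply ln_pos'. unfold jb. apply sqle; [apply sqrt_pos|]. rewrite sqrt_sqrt; nra. }
  split; [rewrite hr0; nra|].
  split; [exact hr0|].
  split; [split; nra|].
  split.
  { fold y. assert (9 * ln (jb (x - k)) <= C * ln (jb (x - k))) by (apply Rmult_le_compat_r; lra). lra. }
  assert (hxk : 0 <= x - k) by lra.
  split.
  { rewrite hth. assert (p*y <= p*(3*(x-k))) by (apply Rmult_le_compat_l; lra).
    assert (3*(p*(x-k)) <= C*(p*(x-k))) by (apply Rmult_le_compat_r; [apply Rmult_le_pos|]; lra).
    replace (p * x - p * k) with (p*(x-k)) by ring. lra. }
  { rewrite hth. assert (p*x <= p*(10*(1+y))) by (apply Rmult_le_compat_l; lra).
    assert (10*(p*(1+y)) <= C*(p*(1+y))) by (apply Rmult_le_compat_r; [apply Rmult_le_pos|]; lra).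
    replace (p + p*y) with (p*(1+y)) by ring. assert (0 <= p*k) by (apply Rmult_le_pos; lra). lra. }
Qed.
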